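(* In the projected continuous MRA model with any $L\ge1$, for all $\theta,\theta_*\in\mathbb{R}^d$, \[\tilde s_1(\theta)=\big(\theta^{(0)}-\theta_*^{(0)}\big)^2,\qquad \tilde s_2(\theta)=\big((\theta^{(0)})^2-(\theta_*^{(0)})^2\big)^2+\tfrac14\sum_{l=1}^L\big(r_l(\theta)^2-r_l(\theta_* )^2\big)^2,\] \[\tilde s_3(\theta)=\tfrac23\big((\theta^{(0)})^3-(\theta_*^{(0)})^3\big)^2+\tfrac12\sum_{l=1}^L\big(\theta^{(0)}r_l(\theta)^2-\theta_*^{(0)}r_l(\theta_* )^2\big)^2+\tfrac1{16}\sum_{\substack{l,l',l''=1\\l=l'+l''}}^L\Big(r_{l,l',l''}(\theta)^2+r_{l,l',l''}(\theta_* )^2-2r_{l,l',l''}(\theta)r_{l,l',l''}(\theta_* )\cos\big(\lambda_{l,l',l''}(\theta_* )-\lambda_{l,l',l''}(\theta)\big)\] \[\qquad+r_{l,l',l''}(\theta)^2\cos\big(2\lambda_{l,l',l''}(\theta)\big)+r_{l,l',l''}(\theta_* )^2\cos\big(2\lambda_{l,l',l''}(\theta_* )\big)-2r_{l,l',l''}(\theta)r_{l,l',l''}(\theta_* )\cos\big(\lambda_{l,l',l''}(\theta_* )+\lambda_{l,l',l''}(\theta)\big)\Big).\]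
   Context: Let $\theta=(\theta^{(0)},\theta_1^{(1)},\theta_2^{(1)},\dots,\theta_1^{(L)},\theta_2^{(L)})\in\mathbb{R}^d$, $d=2L+1$; $\mathsf{G}\subset\mathsf{O}(d)$ is the group of $g=\operatorname{diag}(1,R_1(\mathfrak g),\dots,R_L(\mathfrak g))$, $\mathfrak g\in[0,1)$, $R_l(\mathfrak g)=\begin{pmatrix}\cos2\pi l\mathfrak g&\sin2\pi l\mathfrak g\\-\sin2\pi l\mathfrak g&\cos2\pi l\mathfrak g\end{pmatrix}$, with Haar probability measure $\Lambda$; $\Pi(\theta)=\sqrt2(\theta^{(0)},\theta_1^{(1)},\dots,\theta_1^{(L)})\in\mathbb{R}^{L+1}$. $\widetilde T_k(\theta)=\int(\Pi g\theta)^{\otimes k}d\Lambda(g)$ and $\tilde s_k(\theta)=\frac1{2(k!)}\|\widetilde T_k(\theta)-\widetilde T_k(\theta_* )\|^2_{\mathrm{HS}}$ (Euclidean norm of tensor entries). For $l\ge1$, $\theta_1^{(l)}+i\theta_2^{(l)}=r_l(\theta)e^{i\lambda_l(\theta)}$; $r_{l,l',l''}=r_lr_{l'}r_{l''}$, $\lambda_{l,l',l''}=\lambda_l-\lambda_{l'}-\lambda_{l''}$. *)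

(* Defs.v *)
From Stdlib Require Import Reals List Arith.
From Coquelicot Require Import Coquelicot.
Import ListNotations.
Open Scope R_scope.

(* A parameter theta in R^d, d = 2L+1, is encoded by
   t0 = theta^(0), t1 l = theta_1^(l), t2 l = theta_2^(l) (l = 1..L);
   values of t1, t2 at indices outside 1..L are irrelevant. *)

(* Component i (i = 0..L) of Pi(g theta), with g parametrized by gg in [0,1):
   (R_l(gg) (t1 l, t2 l))_1 = cos(2 pi l gg) t1 l + sin(2 pi l gg) t2 l. *)
Definition proj_rot (t0 : R) (t1 t2 : nat -> R) (gg : R) (i : nat) : R :=
  match i with
  | O => sqrt 2 * t0
  | S _ => sqrt 2 * (cos (2 * PI * INR i * gg) * t1 i + sin (2 * PI * INR i * gg) * t2 i)
  end.

Fixpoint multi_indices (n k : nat) : list (list nat) :=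
  match k with
  | O => [ [] ]
  | S k' => flat_map (fun i => map (cons i) (multi_indices n k')) (seq 0 n)
  end.

(* Entry (i_1..i_k) of T~_k(theta) = int (Pi g theta)^{(x)k} dLambda(g);
   the Haar probability measure on G is the uniform measure on gg in [0,1]. *)
Definition Ttilde (t0 : R) (t1 t2 : nat -> R) (idx : list nat) : R :=
  RInt (fun gg => fold_right Rmult 1 (map (proj_rot t0 t1 t2 gg) idx)) 0 1.

Definition sumR (l : list R) : R := fold_right Rplus 0 l.

Definition stilde (L k : nat) (t0 : R) (t1 t2 : nat -> R)
  (s0 : R) (s1 s2 : nat -> R) : R :=
  / (2 * INR (fact k)) *
  sumR (map (fun idx => (Ttilde t0 t1 t2 idx - Ttilde s0 s1 s2 idx) ^ 2)
            (multi_indices (S L) k)).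

Definition sum1L (L : nat) (f : nat -> R) : R := sumR (map f (seq 1 L)).

Definition rmod (t1 t2 : nat -> R) (l : nat) : R := sqrt (t1 l ^ 2 + t2 l ^ 2).

Definition polar_angles (L : nat) (t1 t2 : nat -> R) (lam : nat -> R) : Prop :=
  forall l, (1 <= l <= L)%nat ->
    t1 l = rmod t1 t2 l * cos (lam l) /\ t2 l = rmod t1 t2 l * sin (lam l).

Definition r3 (t1 t2 : nat -> R) (l l' l'' : nat) : R :=
  rmod t1 t2 l * rmod t1 t2 l' * rmod t1 t2 l''.
Definition lam3 (lam : nat -> R) (l l' l'' : nat) : R := lam l - lam l' - lam l''.

Definition s3_term (t1 t2 lam s1 s2 lams : nat -> R) (l l' l'' : nat) : R :=
  let a := r3 t1 t2 l l' l'' in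
  let b := r3 s1 s2 l l' l'' in
  let x := lam3 lam l l' l'' in
  let y := lam3 lams l l' l'' in
  a ^ 2 + b ^ 2 - 2 * a * b * cos (y - x)
  + a ^ 2 * cos (2 * x) + b ^ 2 * cos (2 * y) - 2 * a * b * cos (y + x).

(* Main.v *)
Require Import Defs.
From Stdlib Require Import Reals List Arith Lra Lia ZArith.
From Coquelicot Require Import Coquelicot.
Import ListNotations.
Open Scope R_scope.

Lemma sumR_cons {A} (f : A -> R) a l : sumR (map f (a :: l)) = f a + sumR (map f l).
Proof. reflexivity. Qed.

Lemma sumR_ext_in {A} (l : list A) f g : (forall x, In x l -> f x = g x) ->
  sumR (map f l) = sumR (map g l).
Proof.
  induction l as [|a l IH]; intro H; [reflexivity|].
  rewrite !sumR_cons. rewrite H by (left; auto). rewrite IH; auto.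
  intros x Hx; apply H; right; auto.
Qed.

Lemma sumR_plus {A} (l : list A) f g :
  sumR (map (fun x => f x + g x) l) = sumR (map f l) + sumR (map g l).
Proof.
  induction l as [|a l IH]; [unfold sumR; simpl; ring|].
  rewrite !sumR_cons, IH. ring.
Qed.

Lemma sumR_scal {A} (l : list A) c f :
  sumR (map (fun x => c * f x) l) = c * sumR (map f l).
Proof.
  induction l as [|a l IH]; [unfold sumR; simpl; ring|].
  rewrite !sumR_cons, IH. ring.
Qed.

Lemma sumR_0 {A} (l : list A) : sumR (map (fun _ => 0) l) = 0.
Proof.
  induction l as [|a l IH]; [reflexivity|]. rewrite sumR_cons, IH. ring.
Qed.

Lemma sumR_swap {A B} (s : list A) (t : list B) f :
  sumR (map (fun x => sumR (map (fun y => f x y) t)) s) =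
  sumR (map (fun y => sumR (map (fun x => f x y) s)) t).
Proof.
  induction s as [|a s IH].
  { transitivity 0; [reflexivity|]. rewrite <- (sumR_0 t). f_equal. }
  rewrite sumR_cons, IH, <- sumR_plus. reflexivity.
Qed.

Lemma sumR_delta (l : list nat) a f : NoDup l -> In a l ->
  sumR (map (fun x => if Nat.eqb a x then f x else 0) l) = f a.
Proof.
  induction l as [|b l IH]; intros Hn Ha; [destruct Ha|].
  inversion Hn; subst. rewrite sumR_cons.
  destruct (Nat.eqb_spec a b).
  - subst. rewrite (sumR_ext_in _ _ (fun _ => 0)), sumR_0; [ring|].
    intros x Hx. destruct (Nat.eqb_spec b x); [subst; contradiction|reflexivity].
  - destruct Ha as [Ha|Ha]; [congruence|]. rewrite IH; auto. ring.
Qed.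

Lemma fold_Rplus (l : list R) r : fold_right Rplus r l = sumR l + r.
Proof. induction l as [|a l IH]; unfold sumR in *; simpl; [ring|]. rewrite IH. ring. Qed.

Lemma sumR_app (l1 l2 : list R) : sumR (l1 ++ l2) = sumR l1 + sumR l2.
Proof. unfold sumR at 1. rewrite fold_right_app, fold_Rplus. fold (sumR l2). ring. Qed.

Lemma sumR_flat {A} (F : list A -> R) (s : list A) (M : list (list A)) :
  sumR (map F (flat_map (fun i => map (cons i) M) s)) =
  sumR (map (fun i => sumR (map (fun x => F (i :: x)) M)) s).
Proof.
  induction s as [|a s IH]; [reflexivity|].
  simpl flat_map. rewrite map_app, sumR_app, sumR_cons, <- IH, map_map. reflexivity.
Qed.

Lemma multi1 F n : sumR (map F (multi_indices n 1)) = sumR (map (fun i => F [i]) (seq 0 n)).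
Proof.
  cbn [multi_indices]. rewrite sumR_flat. apply sumR_ext_in. intros i _.
  unfold sumR; simpl. ring.
Qed.

Lemma multi2 F n : sumR (map F (multi_indices n 2)) =
  sumR (map (fun i => sumR (map (fun j => F [i; j]) (seq 0 n))) (seq 0 n)).
Proof.
  cbn [multi_indices]. rewrite sumR_flat. apply sumR_ext_in. intros i _.
  rewrite sumR_flat. apply sumR_ext_in. intros j _.
  unfold sumR; simpl. ring.
Qed.

Lemma multi3 F n : sumR (map F (multi_indices n 3)) =
  sumR (map (fun i => sumR (map (fun j => sumR (map (fun k => F [i; j; k]) (seq 0 n))) (seq 0 n))) (seq 0 n)).
Proof.
  cbn [multi_indices]. rewrite sumR_flat. apply sumR_ext_in. intros i _.
  rewrite sumR_flat. apply sumR_ext_in. intros j _.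
  rewrite sumR_flat. apply sumR_ext_in. intros k _.
  unfold sumR; simpl. ring.
Qed.

Lemma sin_periodZ (x : R) (m : Z) : sin (x + 2 * IZR m * PI) = sin x.
Proof.
  destruct (Z_le_gt_dec 0 m) as [H|H].
  - rewrite <- (Z2Nat.id m) by lia. rewrite <- INR_IZR_INZ. apply sin_period.
  - set (n := Z.to_nat (- m)).
    rewrite <- (sin_period (x + 2 * IZR m * PI) n).
    f_equal. unfold n. rewrite INR_IZR_INZ, Z2Nat.id by lia. rewrite opp_IZR. ring.
Qed.

Lemma is_RInt_conv (f : R -> R) a b l l' : is_RInt f a b l -> l = l' -> is_RInt f a b l'.
Proof. intros H ->; exact H. Qed.

Definition Fc (m : Z) (p g : R) : R := cos (2 * PI * IZR m * g + p).
Definition indc (m : Z) (p : R) : R := if Z.eqb m 0 then cos p else 0.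

Lemma F_isRInt (m : Z) (phi : R) : is_RInt (Fc m phi) 0 1 (indc m phi).
Proof.
  unfold Fc, indc.
  destruct (Z.eqb_spec m 0) as [Hm|Hm].
  - subst m. eapply is_RInt_conv.
    + eapply is_RInt_ext; [| apply (is_RInt_const 0 1 (cos phi))].
      intros x _. simpl. f_equal. ring.
    + cbv [scal]; simpl; unfold mult; simpl; ring.
  - assert (HP : PI <> 0) by (pose proof PI_RGT_0; lra).
    assert (HZ : IZR m <> 0) by (apply not_0_IZR; exact Hm).
    eapply is_RInt_conv.
    + apply (is_RInt_derive (fun g => sin (2 * PI * IZR m * g + phi) / (2 * PI * IZR m))).
      * intros x _. auto_derive; [easy|]. field. split; auto.
      * intros x _. apply (ex_derive_continuous (K:=R_AbsRing) (V:=R_NormedModule) (fun g => cos (2 * PI * IZR m * g + phi))). auto_derive. easy.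
    + cbv [minus plus opp]; simpl.
      replace (2 * PI * IZR m * 1 + phi) with (phi + 2 * IZR m * PI) by ring.
      rewrite sin_periodZ. replace (2 * PI * IZR m * 0 + phi) with phi by ring. field. split; auto.
Qed.

Lemma isR_scal (f : R -> R) a b k l : is_RInt f a b l -> is_RInt (fun x => k * f x) a b (k * l).
Proof. intro H. apply (is_RInt_scal f a b k l H). Qed.

Lemma isR_plus (f g : R -> R) a b lf lg : is_RInt f a b lf -> is_RInt g a b lg ->
  is_RInt (fun x => f x + g x) a b (lf + lg).
Proof. intros H1 H2. apply (is_RInt_plus f g a b lf lg H1 H2). Qed.

Definition rho (t0 : R) (t1 t2 : nat -> R) (i : nat) : R :=
  match i with O => t0 | S _ => rmod t1 t2 i end.
Definition mu (lam : nat -> R) (i : nat) : R :=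
  match i with O => 0 | S _ => lam i end.
Definition zn (i : nat) : Z := Z.of_nat i.

Lemma proj_polar L t0 t1 t2 lam g i : polar_angles L t1 t2 lam -> (i <= L)%nat ->
  proj_rot t0 t1 t2 g i = sqrt 2 * (rho t0 t1 t2 i * Fc (zn i) (- mu lam i) g).
Proof.
  intros H Hi. unfold Fc, zn. destruct i as [|i'].
  - simpl. replace (2 * PI * 0 * g + - 0) with 0 by ring. rewrite cos_0. ring.
  - destruct (H (S i')) as [H1 H2]; [lia|].
    unfold proj_rot, rho, mu. rewrite <- INR_IZR_INZ.
    rewrite H1, H2. rewrite cos_plus, cos_neg, sin_neg. ring.
Qed.

Lemma pw1 s a A : (s * (a * A)) * 1 = s * (a * A).
Proof. ring. Qed.

Lemma pw2 s a b zi zj pi pj g : s * s = 2 ->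
  (s * (a * Fc zi pi g)) * ((s * (b * Fc zj pj g)) * 1) =
  a * b * (Fc (zi + zj) (pi + pj) g + Fc (zi - zj) (pi - pj) g).
Proof.
  intro Hs. unfold Fc. rewrite plus_IZR, minus_IZR.
  set (A := 2 * PI * IZR zi * g + pi). set (B := 2 * PI * IZR zj * g + pj).
  replace (2 * PI * (IZR zi + IZR zj) * g + (pi + pj)) with (A + B) by (unfold A, B; ring).
  replace (2 * PI * (IZR zi - IZR zj) * g + (pi - pj)) with (A - B) by (unfold A, B; ring).
  rewrite cos_plus, cos_minus.
  replace (s * (a * cos A) * (s * (b * cos B) * 1)) with ((s * s) * (a * b * (cos A * cos B))) by ring.
  rewrite Hs. ring.
Qed.

Lemma pw3 s a b c zi zj zk pi pj pk g : s * s = 2 ->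
  (s * (a * Fc zi pi g)) * ((s * (b * Fc zj pj g)) * ((s * (c * Fc zk pk g)) * 1)) =
  s * (/ 2 * (a * b * c) * (Fc (zi + zj + zk) (pi + pj + pk) g + Fc (zi + zj - zk) (pi + pj - pk) g
     + Fc (zi - zj + zk) (pi - pj + pk) g + Fc (zj + zk - zi) (pj + pk - pi) g)).
Proof.
  intro Hs. unfold Fc. rewrite !plus_IZR, !minus_IZR, !plus_IZR.
  set (A := 2 * PI * IZR zi * g + pi). set (B := 2 * PI * IZR zj * g + pj).
  set (C := 2 * PI * IZR zk * g + pk).
  replace (2 * PI * (IZR zi + IZR zj + IZR zk) * g + (pi + pj + pk)) with (A + B + C) by (unfold A, B, C; ring).
  replace (2 * PI * (IZR zi + IZR zj - IZR zk) * g + (pi + pj - pk)) with (A + B - C) by (unfold A, B, C; ring).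
  replace (2 * PI * (IZR zi - IZR zj + IZR zk) * g + (pi - pj + pk)) with (A - B + C) by (unfold A, B, C; ring).
  replace (2 * PI * (IZR zj + IZR zk - IZR zi) * g + (pj + pk - pi)) with (B + C - A) by (unfold A, B, C; ring).
  repeat first [rewrite cos_plus | rewrite cos_minus | rewrite sin_plus | rewrite sin_minus].
  replace (s * (a * cos A) * (s * (b * cos B) * (s * (c * cos C) * 1))) with ((s * s) * s * (a * b * c * (cos A * cos B * cos C))) by ring.
  rewrite Hs. field.
Qed.

Lemma s2 : sqrt 2 * sqrt 2 = 2.
Proof. apply sqrt_sqrt. lra. Qed.

Definition EE1 t0 t1 t2 lam i := rho t0 t1 t2 i * indc (zn i) (- mu lam i).
Definition EE2 t0 t1 t2 lam i j :=
  rho t0 t1 t2 i * rho t0 t1 t2 j *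
  (indc (zn i + zn j) (- mu lam i + - mu lam j) + indc (zn i - zn j) (- mu lam i - - mu lam j)).
Definition EE3 t0 t1 t2 lam i j k :=
  let pi := - mu lam i in let pj := - mu lam j in let pk := - mu lam k in
  let zi := zn i in let zj := zn j in let zk := zn k in
  / 2 * (rho t0 t1 t2 i * rho t0 t1 t2 j * rho t0 t1 t2 k) *
  (indc (zi + zj + zk) (pi + pj + pk) + indc (zi + zj - zk) (pi + pj - pk)
     + indc (zi - zj + zk) (pi - pj + pk) + indc (zj + zk - zi) (pj + pk - pi)).

Lemma T1 L t0 t1 t2 lam i : polar_angles L t1 t2 lam -> (i <= L)%nat ->
  Ttilde t0 t1 t2 [i] = sqrt 2 * EE1 t0 t1 t2 lam i.
Proof.
  intros H Hi. unfold Ttilde, EE1. apply is_RInt_unique.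
  eapply is_RInt_conv.
  - eapply is_RInt_ext; [| apply (isR_scal _ 0 1 (sqrt 2 * rho t0 t1 t2 i) _ (F_isRInt (zn i) (- mu lam i)))].
    intros x _. simpl. rewrite (proj_polar L _ _ _ lam) by auto. ring.
  - rewrite Rmult_assoc; reflexivity.
Qed.

Lemma T2 L t0 t1 t2 lam i j : polar_angles L t1 t2 lam -> (i <= L)%nat -> (j <= L)%nat ->
  Ttilde t0 t1 t2 [i; j] = EE2 t0 t1 t2 lam i j.
Proof.
  intros H Hi Hj. unfold Ttilde, EE2. apply is_RInt_unique.
  eapply is_RInt_ext; [| apply (isR_scal _ 0 1 (rho t0 t1 t2 i * rho t0 t1 t2 j) _
     (isR_plus _ _ 0 1 _ _ (F_isRInt (zn i + zn j) (- mu lam i + - mu lam j))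
                          (F_isRInt (zn i - zn j) (- mu lam i - - mu lam j))))].
  intros x _. simpl. rewrite !(proj_polar L _ _ _ lam) by auto. rewrite pw2 by exact s2. reflexivity.
Qed.

Lemma T3 L t0 t1 t2 lam i j k : polar_angles L t1 t2 lam -> (i <= L)%nat -> (j <= L)%nat ->
  (k <= L)%nat -> Ttilde t0 t1 t2 [i; j; k] = sqrt 2 * EE3 t0 t1 t2 lam i j k.
Proof.
  intros H Hi Hj Hk. unfold Ttilde, EE3. apply is_RInt_unique.
  set (pi := - mu lam i). set (pj := - mu lam j). set (pk := - mu lam k).
  set (zi := zn i). set (zj := zn j). set (zk := zn k).
  eapply is_RInt_conv; [ eapply is_RInt_ext; [| apply (isR_scal _ 0 1 (sqrt 2 * (/ 2 * (rho t0 t1 t2 i * rho t0 t1 t2 j * rho t0 t1 t2 k))) _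
     (isR_plus _ _ 0 1 _ _ (isR_plus _ _ 0 1 _ _ (isR_plus _ _ 0 1 _ _
        (F_isRInt (zi + zj + zk) (pi + pj + pk))
        (F_isRInt (zi + zj - zk) (pi + pj - pk)))
        (F_isRInt (zi - zj + zk) (pi - pj + pk)))
        (F_isRInt (zj + zk - zi) (pj + pk - pi))))] | ].
  - intros x _. simpl. rewrite !(proj_polar L _ _ _ lam) by auto. rewrite pw3 by exact s2. apply Rmult_assoc.
  - cbv zeta. apply Rmult_assoc.
Qed.

Lemma sq2diff a b : (sqrt 2 * a - sqrt 2 * b) ^ 2 = 2 * (a - b) ^ 2.
Proof. replace ((sqrt 2 * a - sqrt 2 * b) ^ 2) with ((sqrt 2 * sqrt 2) * (a - b) ^ 2) by ring. rewrite s2. ring. Qed.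

Lemma rho_S t0 t1 t2 i : (i <> 0)%nat -> rho t0 t1 t2 i = rmod t1 t2 i.
Proof. destruct i; [lia|reflexivity]. Qed.
Lemma mu_S lam i : (i <> 0)%nat -> mu lam i = lam i.
Proof. destruct i; [lia|reflexivity]. Qed.

Ltac zdec := unfold indc, zn; repeat match goal with |- context [Z.eqb ?a ?b] => destruct (Z.eqb_spec a b); try lia end.
Ltac cos0 := repeat match goal with |- context [cos ?X] => (replace X with 0 by ring; rewrite cos_0) end.

Lemma inS L x : In x (seq 1 L) -> (1 <= x <= L)%nat.
Proof. rewrite in_seq. lia. Qed.

Lemma part1 L (t0 : R) (t1 t2 : nat -> R) (s0 : R) (s1 s2 : nat -> R) lam lams :
  polar_angles L t1 t2 lam -> polar_angles L s1 s2 lams ->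
  stilde L 1 t0 t1 t2 s0 s1 s2 = (t0 - s0) ^ 2.
Proof.
  intros Hl Hs. unfold stilde. rewrite multi1.
  change (seq 0 (S L)) with (0%nat :: seq 1 L). rewrite sumR_cons.
  rewrite (sumR_ext_in (seq 1 L) _ (fun _ => 0)), sumR_0.
  - rewrite (T1 L _ _ _ lam), (T1 L _ _ _ lams) by (auto; lia).
    rewrite sq2diff. unfold EE1. simpl rho. simpl mu. zdec. cos0. simpl. field.
  - intros i Hi. apply inS in Hi.
    rewrite (T1 L _ _ _ lam), (T1 L _ _ _ lams) by (auto; lia).
    rewrite sq2diff. unfold EE1. zdec. ring.
Qed.

Lemma part2 L (t0 : R) (t1 t2 : nat -> R) (s0 : R) (s1 s2 : nat -> R) lam lams :
  polar_angles L t1 t2 lam -> polar_angles L s1 s2 lams ->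
  stilde L 2 t0 t1 t2 s0 s1 s2 =
    (t0 ^ 2 - s0 ^ 2) ^ 2
    + / 4 * sum1L L (fun l => (rmod t1 t2 l ^ 2 - rmod s1 s2 l ^ 2) ^ 2).
Proof.
  intros Hl Hs. unfold stilde, sum1L. rewrite multi2.
  change (seq 0 (S L)) with (0%nat :: seq 1 L). rewrite sumR_cons. cbv beta.
  rewrite sumR_cons.
  rewrite (sumR_ext_in (seq 1 L) (fun j => (Ttilde t0 t1 t2 [0%nat; j] - Ttilde s0 s1 s2 [0%nat; j]) ^ 2) (fun _ => 0)), sumR_0.
  rewrite (sumR_ext_in (seq 1 L) _ (fun i => (rmod t1 t2 i ^ 2 - rmod s1 s2 i ^ 2) ^ 2)).
  - rewrite (T2 L _ _ _ lam), (T2 L _ _ _ lams) by (auto; lia).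
    unfold EE2. simpl rho. simpl mu. zdec. cos0. simpl. field.
  - intros i Hi. apply inS in Hi. rewrite sumR_cons.
    rewrite (sumR_ext_in (seq 1 L) _ (fun j => if Nat.eqb i j then (rmod t1 t2 j ^ 2 - rmod s1 s2 j ^ 2) ^ 2 else 0)).
    + rewrite sumR_delta; [|apply seq_NoDup|apply in_seq; lia].
      rewrite (T2 L _ _ _ lam), (T2 L _ _ _ lams) by (auto; lia).
      unfold EE2. rewrite !rho_S, !mu_S by lia. simpl rho. simpl mu. zdec. ring.
    + intros j Hj. apply inS in Hj.
      rewrite (T2 L _ _ _ lam), (T2 L _ _ _ lams) by (auto; lia).
      unfold EE2. rewrite !rho_S, !mu_S by lia.
      destruct (Nat.eqb_spec i j); [subst|]; zdec; cos0; ring.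
  - intros j Hj. apply inS in Hj.
    rewrite (T2 L _ _ _ lam), (T2 L _ _ _ lams) by (auto; lia).
    unfold EE2. zdec. ring.
Qed.

Definition Gt (t1 t2 lam s1 s2 lams : nat -> R) (l l' l'' : nat) : R :=
  if Nat.eqb l (l' + l'') then
    / 2 * (r3 t1 t2 l l' l'' * cos (lam3 lam l l' l'') - r3 s1 s2 l l' l'' * cos (lam3 lams l l' l'')) ^ 2
  else 0.

Definition cc (t0 : R) (t1 t2 : nat -> R) (s0 : R) (s1 s2 : nat -> R) (l : nat) : R :=
  t0 * rmod t1 t2 l ^ 2 - s0 * rmod s1 s2 l ^ 2.

Ltac T3rw L lam lams := rewrite (T3 L _ _ _ lam), (T3 L _ _ _ lams) by (auto; lia);
  rewrite sq2diff; unfold EE3; cbv zeta.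

Lemma H000 L t0 t1 t2 s0 s1 s2 lam lams :
  polar_angles L t1 t2 lam -> polar_angles L s1 s2 lams ->
  (Ttilde t0 t1 t2 [0%nat; 0%nat; 0%nat] - Ttilde s0 s1 s2 [0%nat; 0%nat; 0%nat]) ^ 2 = 8 * (t0 ^ 3 - s0 ^ 3) ^ 2.
Proof. intros Hl Hs. T3rw L lam lams. simpl rho. simpl mu. zdec. cos0. field. Qed.

Lemma H00k L t0 t1 t2 s0 s1 s2 lam lams k :
  polar_angles L t1 t2 lam -> polar_angles L s1 s2 lams -> (1 <= k <= L)%nat ->
  (Ttilde t0 t1 t2 [0%nat; 0%nat; k] - Ttilde s0 s1 s2 [0%nat; 0%nat; k]) ^ 2 = 0 /\
  (Ttilde t0 t1 t2 [0%nat; k; 0%nat] - Ttilde s0 s1 s2 [0%nat; k; 0%nat]) ^ 2 = 0 /\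
  (Ttilde t0 t1 t2 [k; 0%nat; 0%nat] - Ttilde s0 s1 s2 [k; 0%nat; 0%nat]) ^ 2 = 0.
Proof. intros Hl Hs Hk. repeat split; T3rw L lam lams; zdec; ring. Qed.

Lemma H0jk L t0 t1 t2 s0 s1 s2 lam lams j k :
  polar_angles L t1 t2 lam -> polar_angles L s1 s2 lams -> (1 <= j <= L)%nat -> (1 <= k <= L)%nat ->
  (Ttilde t0 t1 t2 [0%nat; j; k] - Ttilde s0 s1 s2 [0%nat; j; k]) ^ 2 =
     (if Nat.eqb j k then 2 * cc t0 t1 t2 s0 s1 s2 k ^ 2 else 0) /\
  (Ttilde t0 t1 t2 [j; 0%nat; k] - Ttilde s0 s1 s2 [j; 0%nat; k]) ^ 2 =
     (if Nat.eqb j k then 2 * cc t0 t1 t2 s0 s1 s2 k ^ 2 else 0) /\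
  (Ttilde t0 t1 t2 [j; k; 0%nat] - Ttilde s0 s1 s2 [j; k; 0%nat]) ^ 2 =
     (if Nat.eqb j k then 2 * cc t0 t1 t2 s0 s1 s2 k ^ 2 else 0).
Proof.
  intros Hl Hs Hj Hk. unfold cc.
  repeat split; T3rw L lam lams; rewrite !(rho_S _ _ _ j), !(rho_S _ _ _ k), !(mu_S _ j), !(mu_S _ k) by lia;
  simpl rho; simpl mu; destruct (Nat.eqb_spec j k); [subst| |subst| |subst|]; zdec; cos0; field.
Qed.

Lemma Hijk L t0 t1 t2 s0 s1 s2 lam lams i j k :
  polar_angles L t1 t2 lam -> polar_angles L s1 s2 lams ->
  (1 <= i <= L)%nat -> (1 <= j <= L)%nat -> (1 <= k <= L)%nat ->
  (Ttilde t0 t1 t2 [i; j; k] - Ttilde s0 s1 s2 [i; j; k]) ^ 2 =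
  Gt t1 t2 lam s1 s2 lams i j k + Gt t1 t2 lam s1 s2 lams j i k + Gt t1 t2 lam s1 s2 lams k i j.
Proof.
  intros Hl Hs Hi Hj Hk. T3rw L lam lams.
  rewrite !(rho_S _ _ _ i), !(rho_S _ _ _ j), !(rho_S _ _ _ k), !(mu_S _ i), !(mu_S _ j), !(mu_S _ k) by lia.
  unfold Gt, r3, lam3.
  destruct (Nat.eqb_spec i (j + k)); destruct (Nat.eqb_spec j (i + k)); destruct (Nat.eqb_spec k (i + j));
    try lia; zdec;
  try replace (- lam j + - lam k - - lam i) with (lam i - lam j - lam k) by ring;
  try replace (- lams j + - lams k - - lams i) with (lams i - lams j - lams k) by ring;
  try replace (- lam i - - lam j + - lam k) with (lam j - lam i - lam k) by ring;
  try replace (- lams i - - lams j + - lams k) with (lams j - lams i - lams k) by ring;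
  try replace (- lam i + - lam j - - lam k) with (lam k - lam i - lam j) by ring;
  try replace (- lams i + - lams j - - lams k) with (lams k - lams i - lams j) by ring;
  field.
Qed.

Lemma s3G t1 t2 lam s1 s2 lams l l' l'' :
  (if Nat.eqb l (l' + l'') then s3_term t1 t2 lam s1 s2 lams l l' l'' else 0) =
  4 * Gt t1 t2 lam s1 s2 lams l l' l''.
Proof.
  unfold Gt. destruct (Nat.eqb l (l' + l'')); [|ring].
  unfold s3_term. cbv zeta. rewrite !cos_2a_cos, cos_minus, cos_plus. field.
Qed.

Lemma part3 L (t0 : R) (t1 t2 : nat -> R) (s0 : R) (s1 s2 : nat -> R) lam lams :
  polar_angles L t1 t2 lam -> polar_angles L s1 s2 lams ->
  stilde L 3 t0 t1 t2 s0 s1 s2 =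
    2 / 3 * (t0 ^ 3 - s0 ^ 3) ^ 2
    + / 2 * sum1L L (fun l => (t0 * rmod t1 t2 l ^ 2 - s0 * rmod s1 s2 l ^ 2) ^ 2)
    + / 16 * sum1L L (fun l => sum1L L (fun l' => sum1L L (fun l'' =>
        if Nat.eqb l (l' + l'') then s3_term t1 t2 lam s1 s2 lams l l' l'' else 0))).
Proof.
  intros Hl Hs. unfold stilde, sum1L. rewrite multi3.
  set (G := Gt t1 t2 lam s1 s2 lams). set (c := cc t0 t1 t2 s0 s1 s2).
  set (SL := seq 1 L).
  change (seq 0 (S L)) with (0%nat :: seq 1 L). fold SL.
  rewrite (sumR_ext_in SL (fun l => sumR (map (fun l' => sumR (map (fun l'' =>
        if Nat.eqb l (l' + l'') then s3_term t1 t2 lam s1 s2 lams l l' l'' else 0) SL)) SL)) (fun l => 4 * sumR (map (fun l' => sumR (map (fun l'' => G l l' l'') SL)) SL))).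
  2:{ intros l _. rewrite <- sumR_scal. apply sumR_ext_in. intros l' _.
      rewrite <- sumR_scal. apply sumR_ext_in. intros l'' _. apply s3G. }
  rewrite (sumR_scal SL 4 (fun l => sumR (map (fun l' => sumR (map (fun l'' => G l l' l'') SL)) SL))).
  change (fun l => (t0 * rmod t1 t2 l ^ 2 - s0 * rmod s1 s2 l ^ 2) ^ 2) with (fun l => c l ^ 2).
  rewrite sumR_cons. cbv beta. rewrite sumR_cons. cbv beta. rewrite sumR_cons.
  rewrite (H000 L _ _ _ _ _ _ lam lams) by auto.
  rewrite (sumR_ext_in SL (fun k => (Ttilde t0 t1 t2 [0%nat; 0%nat; k] - Ttilde s0 s1 s2 [0%nat; 0%nat; k]) ^ 2) (fun _ => 0)), sumR_0.
  2:{ intros k Hk. apply inS in Hk. exact (proj1 (H00k L _ _ _ _ _ _ lam lams k Hl Hs Hk)). }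
  rewrite (sumR_ext_in SL (fun j => sumR (map (fun k => (Ttilde t0 t1 t2 [0%nat; j; k] - Ttilde s0 s1 s2 [0%nat; j; k]) ^ 2) (0%nat :: SL))) (fun j => 2 * c j ^ 2)).
  2:{ intros j Hj. apply inS in Hj. rewrite sumR_cons.
      rewrite (proj1 (proj2 (H00k L _ _ _ _ _ _ lam lams j Hl Hs Hj))).
      rewrite (sumR_ext_in SL _ (fun k => if Nat.eqb j k then 2 * c k ^ 2 else 0)).
      - rewrite sumR_delta; [ring|apply seq_NoDup|unfold SL; apply in_seq; lia].
      - intros k Hk. apply inS in Hk. exact (proj1 (H0jk L _ _ _ _ _ _ lam lams j k Hl Hs Hj Hk)). }
  rewrite (sumR_ext_in SL (fun i => sumR (map (fun j => sumR (map (fun k => (Ttilde t0 t1 t2 [i; j; k] - Ttilde s0 s1 s2 [i; j; k]) ^ 2) (0%nat :: SL))) (0%nat :: SL))) (fun i => 4 * c i ^ 2 + (sumR (map (fun j => sumR (map (fun k => G i j k) SL)) SL)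
      + sumR (map (fun j => sumR (map (fun k => G j i k) SL)) SL) + sumR (map (fun j => sumR (map (fun k => G k i j) SL)) SL)))).
  2:{ intros i Hi. apply inS in Hi. rewrite sumR_cons. cbv beta. rewrite sumR_cons.
      rewrite (proj2 (proj2 (H00k L _ _ _ _ _ _ lam lams i Hl Hs Hi))).
      rewrite (sumR_ext_in SL (fun k => (Ttilde t0 t1 t2 [i; 0%nat; k] - Ttilde s0 s1 s2 [i; 0%nat; k]) ^ 2) (fun k => if Nat.eqb i k then 2 * c k ^ 2 else 0)).
      2:{ intros k Hk. apply inS in Hk. exact (proj1 (proj2 (H0jk L _ _ _ _ _ _ lam lams i k Hl Hs Hi Hk))). }
      rewrite sumR_delta; [|apply seq_NoDup|unfold SL; apply in_seq; lia].
      rewrite (sumR_ext_in SL (fun j => sumR (map (fun k => (Ttilde t0 t1 t2 [i; j; k] - Ttilde s0 s1 s2 [i; j; k]) ^ 2) (0%nat :: SL))) (fun j => (if Nat.eqb i j then 2 * c j ^ 2 else 0) +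
          (sumR (map (fun k => G i j k) SL) + sumR (map (fun k => G j i k) SL) + sumR (map (fun k => G k i j) SL)))).
      2:{ intros j Hj. apply inS in Hj. rewrite sumR_cons.
          rewrite (proj2 (proj2 (H0jk L _ _ _ _ _ _ lam lams i j Hl Hs Hi Hj))).
          rewrite <- !sumR_plus. f_equal. apply sumR_ext_in. intros k Hk. apply inS in Hk.
          exact (Hijk L _ _ _ _ _ _ lam lams i j k Hl Hs Hi Hj Hk). }
      rewrite sumR_plus, sumR_delta; [|apply seq_NoDup|unfold SL; apply in_seq; lia].
      rewrite !sumR_plus. ring. }
  rewrite !sumR_plus, sumR_scal.
  rewrite (sumR_swap SL SL (fun i j => sumR (map (fun k => G j i k) SL))).
  rewrite (sumR_ext_in SL (fun i => sumR (map (fun j => sumR (map (fun k => G k i j) SL)) SL))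
     (fun i => sumR (map (fun k => sumR (map (fun j => G k i j) SL)) SL))).
  2:{ intros i _. apply (sumR_swap SL SL (fun j k => G k i j)). }
  rewrite (sumR_swap SL SL (fun i k => sumR (map (fun j => G k i j) SL))).
  simpl (INR (fact 3)). rewrite (sumR_scal SL 4 (fun x => c x ^ 2)). field.
Qed.



Theorem theoremC2 (L : nat) (HL : (1 <= L)%nat)
  (t0 : R) (t1 t2 : nat -> R) (s0 : R) (s1 s2 : nat -> R)
  (lam lams : nat -> R)
  (Hlam : polar_angles L t1 t2 lam) (Hlams : polar_angles L s1 s2 lams) :
  stilde L 1 t0 t1 t2 s0 s1 s2 = (t0 - s0) ^ 2 /\
  stilde L 2 t0 t1 t2 s0 s1 s2 =
    (t0 ^ 2 - s0 ^ 2) ^ 2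
    + / 4 * sum1L L (fun l => (rmod t1 t2 l ^ 2 - rmod s1 s2 l ^ 2) ^ 2) /\
  stilde L 3 t0 t1 t2 s0 s1 s2 =
    2 / 3 * (t0 ^ 3 - s0 ^ 3) ^ 2
    + / 2 * sum1L L (fun l => (t0 * rmod t1 t2 l ^ 2 - s0 * rmod s1 s2 l ^ 2) ^ 2)
    + / 16 * sum1L L (fun l => sum1L L (fun l' => sum1L L (fun l'' =>
        if Nat.eqb l (l' + l'') then s3_term t1 t2 lam s1 s2 lams l l' l'' else 0))).
Proof.
  split; [exact (part1 L t0 t1 t2 s0 s1 s2 lam lams Hlam Hlams)|].
  split; [exact (part2 L t0 t1 t2 s0 s1 s2 lam lams Hlam Hlams)|].
  exact (part3 L t0 t1 t2 s0 s1 s2 lam lams Hlam Hlams).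
Qed.
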